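(* With $h$ as defined in the context, for every $x\in\mathbb C$ such that neither $x$ nor $x+\frac12$ belongs to $\{-1,-2,-3,\dots\}$, \[h(x)=\frac{x+1}{x+\frac 32}\,h\left(x+\frac 12\right)h(2x).\]
   Context: Let $u_n=(-1)^{s_2(n)}$, where $s_2(n)$ is the sum of the binary digits of the non-negative integer $n$ (Thue–Morse sequence with values $\pm1$). For $b,c\in\mathbb C\setminus\{-1,-2,-3,\dots\}$ let $f(b,c)=\prod_{n=1}^\infty\left(\frac{n+b}{n+c}\right)^{u_n}$ (convergent), and define $h(x)=f\left(\frac x2,\frac{x+1}{2}\right)=\prod_{n=1}^\infty\left(\frac{2n+x}{2n+1+x}\right)^{u_n}$ for $x\in\mathbb C\setminus\{-2,-3,-4,\dots\}$. *)

(* Defs.v *)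
From Stdlib Require Import Reals ZArith ClassicalEpsilon.
From Coquelicot Require Import Coquelicot.
Open Scope C_scope.

Fixpoint s2_pos (p : positive) : nat :=
  match p with
  | xH => 1%nat
  | xO q => s2_pos q
  | xI q => S (s2_pos q)
  end.

Definition s2 (n : nat) : nat :=
  match N.of_nat n with
  | N0 => 0%nat
  | Npos p => s2_pos p
  end.

(* z ^ (u_n), where u_n = (-1)^(s2 n) in {1,-1}. *)
Definition pow_u (n : nat) (z : C) : C :=
  if Nat.even (s2 n) then z else / z.

Fixpoint f_part (b c : C) (N : nat) : C :=
  match N with
  | O => 1
  | S M => f_part b c M * pow_u (S M) ((RtoC (INR (S M)) + b) / (RtoC (INR (S M)) + c))
  end.

Definition f (b c : C) : C :=
  epsilon (inhabits (RtoC 0))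
    (fun l => filterlim (fun N => f_part b c N) eventually (locally l)).

Definition h (x : C) : C := f (x / 2) ((x + 1) / 2).

(* Main.v *)
Require Import Defs.
From Stdlib Require Import Reals Lia Lra ZArith Classical ClassicalEpsilon.
From Coquelicot Require Import Coquelicot.
Open Scope C_scope.
Lemma s2_double n : s2 (2*n) = s2 n.
Proof. unfold s2. rewrite Nnat.Nat2N.inj_double. destruct (N.of_nat n); reflexivity. Qed.
Lemma s2_double1 n : s2 (S (2*n)) = S (s2 n).
Proof. unfold s2. rewrite Nnat.Nat2N.inj_succ_double. destruct (N.of_nat n); reflexivity. Qed.

Lemma pow_u_even n z : pow_u (2*n) z = if Nat.even (s2 n) then z else /z.
Proof. unfold pow_u. rewrite s2_double. reflexivity. Qed.
Lemma pow_u_odd n z : pow_u (S (2*n)) z = if Nat.even (s2 n) then /z else z.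
Proof. unfold pow_u. rewrite s2_double1, Nat.even_succ, <- Nat.negb_even.
  destruct (Nat.even (s2 n)); reflexivity. Qed.

Definition F (y : C) (N : nat) := f_part (y/2) ((y+1)/2) N.
Definition t (y:C) (m:nat) : C := (RtoC (INR m) + y/2) / (RtoC (INR m) + (y+1)/2).
Lemma F_S y M : F y (S M) = F y M * pow_u (S M) (t y (S M)).
Proof. reflexivity. Qed.

Lemma F_SS y N : F y (S (2 * S N)) = F y (S (2*N)) *
   (if Nat.even (s2 (S N)) then t y (2 * S N) / t y (S (2 * S N)) else / t y (2 * S N) * t y (S (2 * S N))).
Proof.
  rewrite F_S. replace (2 * S N)%nat with (S (S (2*N))) at 1 by lia.
  rewrite F_S. replace (S (S (2*N))) with (2 * S N)%nat by lia.
  rewrite pow_u_even, pow_u_odd. destruct (Nat.even (s2 (S N))); unfold Cdiv; ring.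
Qed.

Lemma INR_C_S k : RtoC (INR (S k)) = RtoC (INR k) + 1.
Proof. rewrite S_INR, RtoC_plus. reflexivity. Qed.

Definition tt (z : C) := z / (z + 1).
Ltac nzt := cbv beta; repeat split; let E := fresh "E" in intro E;
  match goal with H : not (eq ?a _) |- _ => apply H;
    match type of E with ?b = _ => first
      [ transitivity b; [ring | exact E]
      | transitivity (b * 2); [ring | rewrite E; ring]
      | transitivity (b / 2); [field | rewrite E; field] ] end end.
Lemma step_even (X : C) : X <> 0 -> 2*X + 1 <> 0 -> X + 1 <> 0 -> 2*X + 3 <> 0 ->
  tt (2*X) / tt (2*X+2) * tt (X + 1/2) = tt X.
Proof. intros. unfold tt. field. nzt. Qed.
Lemma step_odd (X : C) : X <> 0 -> 2*X + 1 <> 0 -> X + 1 <> 0 -> 2*X + 3 <> 0 ->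
  / tt (2*X) * tt (2*X+2) * / tt (X + 1/2) = / tt X.
Proof. intros. unfold tt. field. nzt. Qed.
Lemma Cinv_0 : / (0:C) = 0.
Proof. unfold Cinv. simpl. rewrite !Rmult_0_l, Rplus_0_l, Ropp_0, Rdiv_0_l. reflexivity. Qed.
Lemma t_eq y m : t y m = tt (2 * RtoC (INR m) + y).
Proof.
  unfold t, tt. destruct (classic (2 * RtoC (INR m) + y + 1 = 0)) as [E|E].
  - replace (RtoC (INR m) + (y + 1) / 2) with ((2 * RtoC (INR m) + y + 1)/2) by field.
    rewrite E. unfold Cdiv. rewrite Cmult_0_l, Cinv_0, !Cmult_0_r. reflexivity.
  - field. exact E.
Qed.

Lemma INR_a N : RtoC (INR (S (2*N+1))) = 2 * RtoC (INR (S N)).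
Proof. rewrite !S_INR, plus_INR, mult_INR, !RtoC_plus, RtoC_mult. simpl. rewrite RtoC_plus. ring. Qed.
Lemma INR_b N : RtoC (INR (S (2*N+2))) = 2 * RtoC (INR (S N)) + 1.
Proof. rewrite !S_INR, plus_INR, mult_INR, !RtoC_plus, RtoC_mult. simpl. rewrite !RtoC_plus. ring. Qed.
Lemma INR_c N : RtoC (INR (2 * S N)) = 2 * RtoC (INR (S N)).
Proof. rewrite mult_INR, RtoC_mult. simpl. rewrite !RtoC_plus. ring. Qed.
Lemma INR_d N : RtoC (INR (S (2 * S N))) = 2 * RtoC (INR (S N)) + 1.
Proof. rewrite S_INR, RtoC_plus, INR_c. ring. Qed.

Lemma FI x (Hn : forall k, x + RtoC (INR (S k)) <> 0) (Hn2 : forall k, x + 1/2 + RtoC (INR (S k)) <> 0) N :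
 F (2*x) (S (2*N)) * F (x + 1/2) N = (x + 3/2)/(x+1) * F x N.
Proof.
  induction N as [|N IH].
  - simpl (2*0)%nat. rewrite F_S. unfold F. simpl f_part. unfold pow_u. simpl.
    rewrite t_eq. unfold tt. simpl INR.
    pose proof (Hn 0%nat) as H1. pose proof (Hn2 0%nat) as H2. simpl INR in H1, H2.
    field. nzt.
  - rewrite F_SS, (F_S (x+1/2) N), (F_S x N).
    set (r := RtoC (INR (S N))).
    pose proof (Hn (2*N+1)%nat) as H1. pose proof (Hn2 (2*N+1)%nat) as H2.
    pose proof (Hn (2*N+2)%nat) as H3. pose proof (Hn2 (2*N+2)%nat) as H4.
    rewrite INR_a in H1, H2. rewrite INR_b in H3, H4. fold r in H1, H2, H3, H4.
    rewrite !t_eq, INR_c, INR_d. fold r.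
    set (X := 2 * r + x).
    replace (2 * (2 * r) + 2 * x) with (2 * X) by (unfold X; ring).
    replace (2 * (2 * r + 1) + 2 * x) with (2 * X + 2) by (unfold X; ring).
    replace (2 * r + (x + 1/2)) with (X + 1/2) by (unfold X; ring).
    assert (A1 : X <> 0) by (unfold X; nzt).
    assert (A2 : 2 * X + 1 <> 0) by (unfold X; nzt).
    assert (A3 : X + 1 <> 0) by (unfold X; nzt).
    assert (A4 : 2 * X + 3 <> 0) by (unfold X; nzt).
    unfold pow_u.
    transitivity (F (2 * x) (S (2 * N)) * F (x + 1 / 2) N *
      (if Nat.even (s2 (S N)) then tt (2 * X) / tt (2 * X + 2) * tt (X + 1/2)
       else / tt (2 * X) * tt (2 * X + 2) * / tt (X + 1/2))).
    { destruct (Nat.even (s2 (S N))); ring. }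
    rewrite IH. destruct (Nat.even (s2 (S N))).
    + rewrite step_even by auto. ring.
    + rewrite step_odd by auto. ring.
Qed.


Lemma nat_big (c : R) : exists N, (c <= INR N)%R /\ (1 <= N)%nat.
Proof.
  assert (Hp : (0 < Rabs c + 1)%R) by (pose proof (Rabs_pos c); lra).
  destruct (archimed_cor1 (/ (Rabs c + 1)) (Rinv_0_lt_compat _ Hp)) as [N [H1 H2]].
  exists N. split; [|lia].
  destruct (Rle_or_lt (Rabs c + 1) (INR N)) as [H|H].
  - pose proof (Rle_abs c). lra.
  - exfalso. assert (0 < INR N)%R by (apply lt_0_INR; lia).
    pose proof (Rinv_le_contravar _ _ H0 (Rlt_le _ _ H)). lra.
Qed.

Lemma Cmod_lb (a : R) (y : C) : (a - Cmod y <= Cmod (RtoC a + y))%R.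
Proof.
  pose proof (Cmod_triangle (RtoC a + y) (- y)).
  replace (RtoC a + y + - y) with (RtoC a) in H by ring.
  rewrite Cmod_R, Cmod_opp in H. pose proof (Rle_abs a). lra.
Qed.

Lemma big (y : C) (r j : R) : (1 <= r)%R -> (Cmod y <= r)%R -> (0 <= j)%R ->
  (3*r <= Cmod (RtoC (4*r + j) + y))%R.
Proof. intros. pose proof (Cmod_lb (4*r+j) y). lra. Qed.

Lemma nz_of (z : C) (r : R) : (0 < r)%R -> (r <= Cmod z)%R -> z <> 0.
Proof. intros H1 H2 E. rewrite E, Cmod_0 in H2. lra. Qed.

Lemma Cmod2 : Cmod 2 = 2%R.
Proof. rewrite Cmod_R. apply Rabs_pos_eq. lra. Qed.

Definition wv y N := if Nat.even (s2 (S N)) then t y (2 * S N) / t y (S (2 * S N))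
   else / t y (2 * S N) * t y (S (2 * S N)).
Definition vv y N := pow_u (2 * S N) (t y (2 * S N)).
Definition G y N := F y (S (2*N)).

Lemma G_S y N : G y (S N) = G y N * wv y N.
Proof. unfold G, wv. rewrite F_SS. reflexivity. Qed.

Lemma F_even y N : F y (2 * S N) = G y N * vv y N.
Proof. unfold G, vv. replace (2 * S N)%nat with (S (S (2*N))) at 1 by lia. rewrite F_S.
  replace (S (S (2*N))) with (2 * S N)%nat by lia. reflexivity. Qed.

Lemma prod_bound (a b r : R) : (3*r <= a)%R -> (3*r <= b)%R -> (1 <= r)%R ->
  (2 / (a * b) <= / (4 * r^2))%R.
Proof.
  intros. assert (9 * r^2 <= a * b)%R by nra.
  unfold Rdiv. apply Rle_trans with (2 * / (9 * r^2))%R.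
  - apply Rmult_le_compat_l; [lra|]. apply Rinv_le_contravar; nra.
  - apply Rmult_le_reg_l with (36 * r^2)%R; [nra|].
    field_simplify; try nra.
Qed.

Lemma w_bound y N : (Cmod y <= INR (S N))%R -> (Cmod (wv y N - 1) <= / (4 * (INR (S N))^2))%R.
Proof.
  intros Hy. set (r := INR (S N)) in *.
  assert (Hr : (1 <= r)%R) by (unfold r; rewrite S_INR; pose proof (pos_INR N); lra).
  unfold wv. rewrite !t_eq, INR_c, INR_d. fold r.
  set (Z := 2 * (2 * RtoC r) + y).
  replace (2 * (2 * RtoC r + 1) + y) with (Z + 2) by (unfold Z; ring).
  assert (B0 : (3*r <= Cmod Z)%R).
  { replace Z with (RtoC (4*r+0) + y) by (unfold Z; rewrite RtoC_plus, RtoC_mult; ring). apply big; lra. }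
  assert (B1 : (3*r <= Cmod (Z+1))%R).
  { replace (Z+1) with (RtoC (4*r+1) + y) by (unfold Z; rewrite RtoC_plus, RtoC_mult; ring). apply big; lra. }
  assert (B2 : (3*r <= Cmod (Z+2))%R).
  { replace (Z+2) with (RtoC (4*r+2) + y) by (unfold Z; rewrite RtoC_plus, RtoC_mult; ring). apply big; lra. }
  assert (B3 : (3*r <= Cmod (Z+3))%R).
  { replace (Z+3) with (RtoC (4*r+3) + y) by (unfold Z; rewrite RtoC_plus, RtoC_mult; ring). apply big; lra. }
  assert (N0 : Z <> 0) by (apply (nz_of _ (3*r)); lra).
  assert (N1 : Z + 1 <> 0) by (apply (nz_of _ (3*r)); lra).
  assert (N2 : Z + 2 <> 0) by (apply (nz_of _ (3*r)); lra).
  assert (N3 : Z + 3 <> 0) by (apply (nz_of _ (3*r)); lra).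
  destruct (Nat.even (s2 (S N))).
  - replace (tt Z / tt (Z + 2) - 1) with (- (2 / ((Z+1) * (Z+2)))).
    2:{ unfold tt. field. nzt. }
    rewrite Cmod_opp, Cmod_div, Cmod2, Cmod_mult by (apply Cmult_neq_0; auto).
    apply prod_bound; auto.
  - replace (/ tt Z * tt (Z + 2) - 1) with (2 / (Z * (Z+3))).
    2:{ unfold tt. field. nzt. }
    rewrite Cmod_div, Cmod2, Cmod_mult by (apply Cmult_neq_0; auto).
    apply prod_bound; auto.
Qed.

Lemma v_bound y N : (Cmod y <= INR (S N))%R -> (Cmod (vv y N - 1) <= / (3 * INR (S N)))%R.
Proof.
  intros Hy. set (r := INR (S N)) in *.
  assert (Hr : (1 <= r)%R) by (unfold r; rewrite S_INR; pose proof (pos_INR N); lra).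
  unfold vv. rewrite pow_u_even, t_eq, INR_c. fold r.
  set (Z := 2 * (2 * RtoC r) + y).
  assert (B0 : (3*r <= Cmod Z)%R).
  { replace Z with (RtoC (4*r+0) + y) by (unfold Z; rewrite RtoC_plus, RtoC_mult; ring). apply big; lra. }
  assert (B1 : (3*r <= Cmod (Z+1))%R).
  { replace (Z+1) with (RtoC (4*r+1) + y) by (unfold Z; rewrite RtoC_plus, RtoC_mult; ring). apply big; lra. }
  assert (N0 : Z <> 0) by (apply (nz_of _ (3*r)); lra).
  assert (N1 : Z + 1 <> 0) by (apply (nz_of _ (3*r)); lra).
  destruct (Nat.even (s2 (S N))).
  - replace (tt Z - 1) with (- (1 / (Z+1))).
    2:{ unfold tt. field. nzt. }
    rewrite Cmod_opp, Cmod_div, Cmod_1 by auto. unfold Rdiv. rewrite Rmult_1_l.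
    apply Rinv_le_contravar; lra.
  - replace (/ tt Z - 1) with (1 / Z).
    2:{ unfold tt. field. nzt. }
    rewrite Cmod_div, Cmod_1 by auto. unfold Rdiv. rewrite Rmult_1_l.
    apply Rinv_le_contravar; lra.
Qed.

Lemma key_ineq (s : R) : (1 <= s)%R -> ((s-1)/s * (1 + / (4 * s^2)) <= s / (s+1))%R.
Proof.
  intros Hs.
  assert (E : (s / (s+1) - (s-1)/s * (1 + / (4 * s^2)) = (3*s^2+1) / (4*s^3*(s+1)))%R) by (field; lra).
  assert (0 <= (3*s^2+1) / (4*s^3*(s+1)))%R.
  { apply Rle_mult_inv_pos; [nra|]. assert (0 < s^3)%R by (apply pow_lt; lra). nra. }
  lra.
Qed.

Lemma G_rec y K N j : (Cmod y <= INR K)%R -> (1 <= K)%nat -> (K <= N)%nat ->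
  (Cmod (G y (N+j) - G y N) <= Cmod (G y N) * ((INR (N+j)) / (INR (N+j) + 1) * ((INR N + 1) / INR N) - 1))%R.
Proof.
  intros HK HK1 HKN.
  assert (HN : (1 <= INR N)%R) by (apply (le_INR 1); lia).
  induction j as [|j IH].
  - rewrite Nat.add_0_r. replace (G y N - G y N) with (RtoC 0) by ring. rewrite Cmod_0.
    replace (INR N / (INR N + 1) * ((INR N + 1) / INR N) - 1)%R with 0%R by (field; lra). lra.
  - rewrite Nat.add_succ_r, G_S.
    set (g := Cmod (G y N)). set (D := Cmod (G y (N + j) - G y N)) in IH.
    set (w := wv y (N+j)).
    assert (Hs1 : INR (S (N+j)) = (INR (N+j) + 1)%R) by apply S_INR.
    set (s := (INR (N+j) + 1)%R) in *.
    assert (Hs : (1 <= s)%R) by (unfold s; pose proof (pos_INR (N+j)); lra).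
    assert (Hw : (Cmod (w - 1) <= / (4 * s^2))%R).
    { unfold w. rewrite <- Hs1. apply w_bound. rewrite Hs1. apply Rle_trans with (INR N); [apply Rle_trans with (INR K); [auto | apply le_INR; auto] |]. unfold s. rewrite plus_INR. pose proof (pos_INR j). lra. }
    set (a := (/ (4 * s^2))%R) in *.
    assert (Ha : (0 <= a)%R) by (unfold a; apply Rlt_le, Rinv_0_lt_compat; nra).
    assert (Hw' : (Cmod w <= 1 + a)%R).
    { replace w with ((w - 1) + 1) by ring. eapply Rle_trans; [apply Cmod_triangle|]. rewrite Cmod_1. lra. }
    replace (G y (N + j) * w - G y N) with ((G y (N + j) - G y N) * w + G y N * (w - 1)) by ring.
    eapply Rle_trans; [apply Cmod_triangle|]. rewrite !Cmod_mult. fold D g.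
    replace (INR (N + S j)) with s by (unfold s; rewrite Nat.add_succ_r, S_INR; reflexivity).
    set (c := ((INR N + 1) / INR N)%R) in *.
    assert (Hc : (0 <= c)%R) by (unfold c; apply Rle_mult_inv_pos; lra).
    pose proof (key_ineq s Hs) as KI. fold a in KI.
    assert (HD : (0 <= D)%R) by apply Cmod_ge_0.
    assert (Hg : (0 <= g)%R) by apply Cmod_ge_0.
    assert (Hwm : (0 <= Cmod w)%R) by apply Cmod_ge_0.
    replace (INR (N+j)) with (s - 1)%R in IH by (unfold s; ring).
    replace (s - 1 + 1)%R with s in IH by ring. set (e1 := ((s-1)/s)%R) in *.
    assert (S1 : (D * Cmod w <= g * (e1 * c - 1) * (1 + a))%R).
    { apply Rle_trans with (g * (e1 * c - 1) * Cmod w)%R.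
      - apply Rmult_le_compat_r; auto.
      - fold g in IH. apply Rmult_le_compat_l; [lra|auto]. }
    assert (S2 : (g * Cmod (w - 1) <= g * a)%R) by (apply Rmult_le_compat_l; auto).
    assert (S3 : (e1 * c * (1 + a) <= s / (s+1) * c)%R).
    { replace (e1 * c * (1 + a))%R with (e1 * (1 + a) * c)%R by ring. apply Rmult_le_compat_r; auto. }
    assert (S4 : (g * (e1 * c * (1 + a)) <= g * (s / (s+1) * c))%R) by (apply Rmult_le_compat_l; auto).
    assert (S5: (g*(e1*c-1)*(1+a) + g*a = g*(e1*c*(1+a)) - g)%R) by ring.
    assert (S6: (g * (s / (s+1) * c - 1) = g * (s / (s+1) * c) - g)%R) by ring.
    fold g. rewrite Hs1. lra.
Qed.

Lemma cauchy_C (u : nat -> C) :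
  (forall eps:R, (0<eps)%R -> exists N, forall m n, (N<=m)%nat -> (N<=n)%nat -> (Cmod (u m - u n) < eps)%R) ->
  exists L, filterlim u eventually (locally L).
Proof.
  intros H.
  apply (@filterlim_locally_cauchy nat C_CompleteNormedModule eventually _ u).
  intros eps. destruct (H eps (cond_pos eps)) as [N HN].
  exists (fun n => (N <= n)%nat). split. exists N; auto.
  intros a b Ha Hb. apply (@norm_compat1 C_AbsRing C_NormedModule).
  apply HN; auto.
Qed.

Lemma G_C1 y K N j : (Cmod y <= INR K)%R -> (1 <= K)%nat -> (K <= N)%nat ->
  (Cmod (G y (N+j) - G y N) <= Cmod (G y N) / INR N)%R.
Proof.
  intros HK HK1 HKN. pose proof (G_rec y K N j HK HK1 HKN) as H.
  assert (HN : (1 <= INR N)%R) by (apply (le_INR 1); lia).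
  pose proof (pos_INR (N+j)).
  assert (INR (N + j) / (INR (N + j) + 1) <= 1)%R.
  { apply Rmult_le_reg_r with (INR (N+j) + 1)%R; [lra|]. unfold Rdiv. rewrite Rmult_assoc, Rinv_l by lra. lra. }
  assert (0 <= (INR N + 1) / INR N)%R by (apply Rle_mult_inv_pos; lra).
  assert (E : ((INR N + 1) / INR N - 1 = / INR N)%R) by (field; lra).
  pose proof (Cmod_ge_0 (G y N)).
  apply Rle_trans with (1 := H). unfold Rdiv at 3. rewrite <- E.
  apply Rmult_le_compat_l; auto.
  assert (INR (N + j) / (INR (N + j) + 1) * ((INR N + 1) / INR N) <= 1 * ((INR N + 1) / INR N))%R
    by (apply Rmult_le_compat_r; auto). lra.
Qed.

Lemma G_C2 y K N j : (Cmod y <= INR K)%R -> (1 <= K)%nat -> (K <= N)%nat ->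
  (Cmod (G y (N+j)) <= 2 * Cmod (G y N))%R.
Proof.
  intros HK HK1 HKN. pose proof (G_C1 y K N j HK HK1 HKN) as H.
  assert (HN : (1 <= INR N)%R) by (apply (le_INR 1); lia).
  pose proof (Cmod_ge_0 (G y N)).
  assert (Cmod (G y N) / INR N <= Cmod (G y N))%R.
  { unfold Rdiv. rewrite <- (Rmult_1_r (Cmod (G y N))) at 2. apply Rmult_le_compat_l; auto.
    rewrite <- Rinv_1. apply Rinv_le_contravar; lra. }
  replace (G y (N+j)) with ((G y (N+j) - G y N) + G y N) by ring.
  eapply Rle_trans; [apply Cmod_triangle|]. lra.
Qed.

Lemma decomp M n : (2*M+2 <= n)%nat -> exists a, (M <= a)%nat /\ (n = S (2*a) \/ n = (2 * S a)%nat).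
Proof.
  intros H. destruct (Nat.Even_or_Odd n) as [[k Hk]|[k Hk]].
  - exists (k-1)%nat. split; [lia|]. right; lia.
  - exists k. split; [lia|]. left; lia.
Qed.

Lemma F_conv y : exists L, filterlim (F y) eventually (locally L).
Proof.
  destruct (nat_big (Cmod y)) as [K [HK HK1]].
  set (B := (2 * Cmod (G y K))%R).
  assert (HB0 : (0 <= B)%R) by (unfold B; pose proof (Cmod_ge_0 (G y K)); lra).
  assert (HGa : forall a, (K <= a)%nat -> (Cmod (G y a) <= B)%R).
  { intros a Ha. replace a with (K + (a - K))%nat by lia. apply (G_C2 y K); auto. }
  assert (HGab : forall a j, (K <= a)%nat -> (Cmod (G y (a + j) - G y a) <= B / INR a)%R).
  { intros a j Ha. eapply Rle_trans; [apply (G_C1 y K a j); auto|].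
    assert (0 < INR a)%R by (apply lt_0_INR; lia).
    unfold Rdiv. apply Rmult_le_compat_r; [apply Rlt_le, Rinv_0_lt_compat; auto| auto]. }
  assert (HFG : forall n a, (K <= a)%nat -> (n = S (2*a) \/ n = (2 * S a)%nat) ->
     (Cmod (F y n - G y a) <= B / INR a)%R).
  { intros n a Ha [-> | ->].
    - unfold G. replace (F y (S (2 * a)) - F y (S (2 * a))) with (RtoC 0) by ring. rewrite Cmod_0.
      assert (0 < INR a)%R by (apply lt_0_INR; lia). apply Rle_mult_inv_pos; auto.
    - rewrite F_even. replace (G y a * vv y a - G y a) with (G y a * (vv y a - 1)) by ring.
      rewrite Cmod_mult.
      assert (Hy : (Cmod y <= INR (S a))%R) by (apply Rle_trans with (INR K); auto; apply le_INR; lia).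
      pose proof (v_bound y a Hy) as Hv.
      assert (0 < INR a)%R by (apply lt_0_INR; lia).
      assert (INR a <= 3 * INR (S a))%R by (rewrite S_INR; lra).
      assert (/ (3 * INR (S a)) <= / INR a)%R by (apply Rinv_le_contravar; lra).
      unfold Rdiv. apply Rmult_le_compat; auto using Cmod_ge_0; lra. }
  apply cauchy_C. intros eps Heps.
  assert (Hp : (0 < eps / (3*B+1))%R) by (apply Rdiv_lt_0_compat; lra).
  destruct (archimed_cor1 _ Hp) as [N1 [HN1 HN1']].
  set (M := Nat.max K N1).
  exists (2*M+2)%nat. intros m n Hm Hn.
  destruct (decomp M m Hm) as [am [Ham Hm']].
  destruct (decomp M n Hn) as [an [Han Hn']].
  assert (HM : (INR N1 <= INR M)%R) by (apply le_INR; lia).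
  assert (HN1p : (0 < INR N1)%R) by (apply lt_0_INR; lia).
  assert (Hinv : forall a, (M <= a)%nat -> (B / INR a <= B * / INR N1)%R).
  { intros a Ha. unfold Rdiv. apply Rmult_le_compat_l; auto. apply Rinv_le_contravar; auto.
    apply Rle_trans with (INR M); auto. apply le_INR; auto. }
  assert (Hmid : (Cmod (G y am - G y an) <= B * / INR N1)%R).
  { destruct (Nat.le_ge_cases am an) as [H|H].
    - replace an with (am + (an - am))%nat by lia.
      replace (G y am - G y (am + (an - am))) with (- (G y (am + (an - am)) - G y am)) by ring.
      rewrite Cmod_opp. eapply Rle_trans; [apply HGab; lia|]. apply Hinv; lia.
    - replace am with (an + (am - an))%nat by lia.
      eapply Rle_trans; [apply HGab; lia|]. apply Hinv; lia. }
  pose proof (HFG m am ltac:(lia) Hm') as H1.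
  pose proof (HFG n an ltac:(lia) Hn') as H2.
  pose proof (Hinv am Ham). pose proof (Hinv an Han).
  replace (F y m - F y n) with ((F y m - G y am) + (G y am - G y an) + - (F y n - G y an)) by ring.
  eapply Rle_lt_trans. { eapply Rle_trans; [apply Cmod_triangle|]. apply Rplus_le_compat; [apply Cmod_triangle | rewrite Cmod_opp; apply Rle_refl]. }
  assert (B * / INR N1 <= B * (eps / (3*B+1)))%R by (apply Rmult_le_compat_l; lra).
  assert (3 * (B * (eps / (3*B+1))) < eps)%R.
  { replace (3 * (B * (eps / (3*B+1))))%R with (eps * (3*B / (3*B+1)))%R by (field; lra).
    assert (3*B / (3*B+1) < 1)%R.
    { apply Rmult_lt_reg_r with (3*B+1)%R; [lra|]. unfold Rdiv. rewrite Rmult_assoc, Rinv_l by lra. lra. }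
    nra. }
  lra.
Qed.

Lemma lim_C_iff (u : nat -> C) L : filterlim u eventually (locally L) <->
  forall eps:R, (0<eps)%R -> exists N, forall n, (N<=n)%nat -> (Cmod (u n - L) < eps)%R.
Proof.
  split.
  - intros H eps Heps.
    assert (He2 : (0 < eps/2)%R) by lra.
    destruct (proj1 (filterlim_locally u L) H (mkposreal _ He2)) as [N HN].
    exists N. intros n Hn. specialize (HN n Hn).
    apply C_NormedModule_mixin_compat2 in HN. simpl in HN.
    assert (sqrt 2 < 2)%R. { pose proof (sqrt_sqrt 2 ltac:(lra)). pose proof (sqrt_pos 2). nra. }
    change (minus (u n) L) with (u n - L) in HN. nra.
  - intros H. apply (proj2 (filterlim_locally u L)). intros eps.
    destruct (H eps (cond_pos eps)) as [N HN]. exists N. intros n Hn.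
    apply (@norm_compat1 C_AbsRing C_NormedModule). apply HN; auto.
Qed.

Lemma lim_mult (u v : nat -> C) a b : filterlim u eventually (locally a) -> filterlim v eventually (locally b) ->
  filterlim (fun n => u n * v n) eventually (locally (a * b)).
Proof.
  intros Hu Hv. rewrite lim_C_iff in Hu, Hv. apply lim_C_iff. intros eps Heps.
  set (c := (1 + Cmod a + Cmod b)%R).
  assert (Hc : (1 <= c)%R) by (unfold c; pose proof (Cmod_ge_0 a); pose proof (Cmod_ge_0 b); lra).
  set (d := Rmin 1 (eps / (2 * c))).
  assert (Hd : (0 < d)%R) by (unfold d; apply Rmin_pos; [lra | apply Rdiv_lt_0_compat; lra]).
  assert (Hd1 : (d <= 1)%R) by apply Rmin_l.
  assert (Hd2 : (d * c <= eps / 2)%R).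
  { assert (d <= eps / (2*c))%R by apply Rmin_r.
    apply Rle_trans with (eps / (2*c) * c)%R; [apply Rmult_le_compat_r; lra|]. right. field. lra. }
  destruct (Hu d Hd) as [N1 H1]. destruct (Hv d Hd) as [N2 H2].
  exists (Nat.max N1 N2). intros n Hn.
  specialize (H1 n ltac:(lia)). specialize (H2 n ltac:(lia)).
  replace (u n * v n - a * b) with ((u n - a) * (v n - b) + (u n - a) * b + a * (v n - b)) by ring.
  eapply Rle_lt_trans. { eapply Rle_trans; [apply Cmod_triangle|]. apply Rplus_le_compat_r. apply Cmod_triangle. }
  rewrite !Cmod_mult.
  pose proof (Cmod_ge_0 (u n - a)). pose proof (Cmod_ge_0 (v n - b)).
  pose proof (Cmod_ge_0 a). pose proof (Cmod_ge_0 b).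
  assert (Cmod (u n - a) * Cmod (v n - b) <= d * d)%R by (apply Rmult_le_compat; lra).
  assert (Cmod (u n - a) * Cmod b <= d * Cmod b)%R by (apply Rmult_le_compat_r; lra).
  assert (Cmod a * Cmod (v n - b) <= Cmod a * d)%R by (apply Rmult_le_compat_l; lra).
  assert (d * d <= d * 1)%R by (apply Rmult_le_compat_l; lra).
  unfold c in Hd2. nra.
Qed.

Lemma lim_const (a : C) : filterlim (fun _ : nat => a) eventually (locally a).
Proof. apply lim_C_iff. intros eps He. exists O. intros. replace (a - a) with (RtoC 0) by ring. rewrite Cmod_0. lra. Qed.

Lemma lim_sub (u : nat -> C) a : filterlim u eventually (locally a) ->
  filterlim (fun n => u (S (2*n))) eventually (locally a).
Proof. intros H. rewrite lim_C_iff in H. apply lim_C_iff. intros eps He. destruct (H eps He) as [N HN]. exists N. intros. apply HN. lia. Qed.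

Lemma lim_uniq (u : nat -> C) L1 L2 : filterlim u eventually (locally L1) -> filterlim u eventually (locally L2) -> L1 = L2.
Proof. intros. apply (@filterlim_locally_unique nat C_AbsRing C_NormedModule eventually _ u); auto. Qed.

Lemma h_lim y : filterlim (F y) eventually (locally (h y)).
Proof.
  destruct (F_conv y) as [L HL].
  exact (epsilon_spec (inhabits (RtoC 0)) (fun l => filterlim (fun N => f_part (y/2) ((y+1)/2) N) eventually (locally l)) (ex_intro _ L HL)).
Qed.

Lemma half : RtoC (1/2) = 1/2.
Proof. rewrite RtoC_div by lra. reflexivity. Qed.
Lemma threehalf : RtoC (3/2) = 3/2.
Proof. rewrite RtoC_div by lra. reflexivity. Qed.

Theorem lemma4 (x : C)
  (hx : forall k : nat, x <> - RtoC (INR (S k)))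
  (hx2 : forall k : nat, x + RtoC (1/2) <> - RtoC (INR (S k))) :
  h x = (x + 1) / (x + RtoC (3/2)) * h (x + RtoC (1/2)) * h (2 * x).
Proof.
  rewrite half in hx2 |- *. rewrite threehalf.
  assert (Hn : forall k, x + RtoC (INR (S k)) <> 0).
  { intros k E. apply (hx k). replace x with (x + RtoC (INR (S k)) - RtoC (INR (S k))) by ring. rewrite E. ring. }
  assert (Hn2 : forall k, x + 1/2 + RtoC (INR (S k)) <> 0).
  { intros k E. apply (hx2 k). replace (x + 1/2) with (x + 1/2 + RtoC (INR (S k)) - RtoC (INR (S k))) by ring. rewrite E. ring. }
  assert (N1 : x + 1 <> 0) by (pose proof (Hn O) as H; simpl INR in H; exact H).
  assert (N2 : x + 3/2 <> 0).
  { pose proof (Hn2 O) as H; simpl INR in H. intro E; apply H. rewrite <- E. field. }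
  pose proof (lim_mult _ _ _ _ (lim_sub _ _ (h_lim (2*x))) (h_lim (x + 1/2))) as A.
  pose proof (lim_mult _ _ _ _ (lim_const ((x + 3/2)/(x+1))) (h_lim x)) as B.
  assert (E : h (2 * x) * h (x + 1/2) = (x + 3/2)/(x+1) * h x).
  { apply (lim_uniq (fun n => F (2 * x) (S (2 * n)) * F (x + 1/2) n)); auto.
    eapply filterlim_ext; [|exact B]. intros n. simpl. symmetry. apply FI; auto. }
  replace (h x) with (h (2 * x) * h (x + 1/2) * ((x+1)/(x+3/2))).
  2:{ rewrite E. field. nzt. }
  ring.
Qed.
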